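(* Let $M$ and $N$ be monoids with finite generating sets $X$ and $Y$ respectively, and suppose $(M,d_X)$ and $(N,d_Y)$ are quasi-isometric. Then $M$ (with respect to $X$) and $N$ (with respect to $Y$) have the same number of ends.
   Context: For a monoid $M$ generated by a finite set $X$, $d_X(x,y)=\inf\{|w|:w\in X^*,\ xw=y\}$ ($X^*$ the free monoid on $X$, $\inf\emptyset=\infty$). A map $f:(M,d_X)\to(N,d_Y)$ is a quasi-isometry if there are $1\le\lambda<\infty$, $0<\epsilon<\infty$, $0\le\mu<\infty$ with $\frac1\lambda d_X(x,y)-\epsilon\le d_Y(f(x),f(y))\le\lambda d_X(x,y)+\epsilon$ for all $x,y\in M$, and for every $n\in N$ some $x\in M$ with $\max(d_Y(n,f(x)),d_Y(f(x),n))\le\mu$. The right Cayley graph of $M$ with respect to $X$ is the directed graph with vertex set $M$ and an edge labelled $a$ from $m$ to $ma$ for each $m\in M$, $a\in X$. The number of ends of $M$ with respect to $X$ is the supremum, over all finite sets $F$ of vertices, of the number of infinite connected components of the graph obtained from the underlying undirected graph of the right Cayley graph by deleting $F$. *)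

(* Defs.v *)
From Stdlib Require Import Reals List Relations.
From Coquelicot Require Import Coquelicot.
Open Scope R_scope.

Record monoid := Monoid {
  mcarrier :> Type;
  mop : mcarrier -> mcarrier -> mcarrier;
  munit : mcarrier;
  massoc : forall a b c, mop a (mop b c) = mop (mop a b) c;
  munit_l : forall a, mop munit a = a;
  munit_r : forall a, mop a munit = a
}.

Definition word_eval (M : monoid) (w : list M) : M :=
  fold_right (mop M) (munit M) w.

Definition word_over (M : monoid) (X : list M) (w : list M) : Prop :=
  forall a, In a w -> In a X.

Definition generates (M : monoid) (X : list M) : Prop :=
  forall m : M, exists w, word_over M X w /\ m = word_eval M w.

(* d_X(x,y) = inf { |w| : w ∈ X^*, x w = y }, with inf ∅ = +oo *)
Definition dist (M : monoid) (X : list M) (x y : M) : Rbar :=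
  Rbar_glb (fun r : Rbar => exists w, word_over M X w /\
              mop M x (word_eval M w) = y /\ r = Finite (INR (length w))).

Definition quasi_isometry (M N : monoid) (X : list M) (Y : list N)
  (f : M -> N) : Prop :=
  exists lam eps mu : R, 1 <= lam /\ 0 < eps /\ 0 <= mu /\
    (forall x y : M,
       Rbar_le (Rbar_minus (Rbar_mult (Finite (/ lam)) (dist M X x y)) (Finite eps))
               (dist N Y (f x) (f y)) /\
       Rbar_le (dist N Y (f x) (f y))
               (Rbar_plus (Rbar_mult (Finite lam) (dist M X x y)) (Finite eps))) /\
    (forall n : N, exists x : M,
       Rbar_le (dist N Y n (f x)) (Finite mu) /\ Rbar_le (dist N Y (f x) n) (Finite mu)).

Definition quasi_isometric (M N : monoid) (X : list M) (Y : list N) : Prop :=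
  exists f : M -> N, quasi_isometry M N X Y f.

(* underlying undirected graph of the right Cayley graph: u -- v iff
   v = u a or u = v a for some a ∈ X *)
Definition cayley_adj (M : monoid) (X : list M) (u v : M) : Prop :=
  exists a, In a X /\ (v = mop M u a \/ u = mop M v a).

Definition adj_minus (M : monoid) (X : list M) (F : list M) (u v : M) : Prop :=
  ~ In u F /\ ~ In v F /\ cayley_adj M X u v.

Definition conn_minus (M : monoid) (X : list M) (F : list M) (u v : M) : Prop :=
  ~ In u F /\ ~ In v F /\ clos_refl_trans M (adj_minus M X F) u v.

Definition infinite_component (M : monoid) (X : list M) (F : list M) (v : M) : Prop :=
  ~ In v F /\ ~ (exists l : list M, forall u, conn_minus M X F v u -> In u l).

Definition at_least_inf_components (M : monoid) (X : list M) (F : list M)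
  (k : nat) : Prop :=
  exists reps : nat -> M,
    (forall i, (i < k)%nat -> infinite_component M X F (reps i)) /\
    (forall i j, (i < k)%nat -> (j < k)%nat -> i <> j ->
       ~ conn_minus M X F (reps i) (reps j)).

Definition num_inf_components (M : monoid) (X : list M) (F : list M) : Rbar :=
  Rbar_lub (fun r : Rbar => exists k : nat,
              at_least_inf_components M X F k /\ r = Finite (INR k)).

Definition num_ends (M : monoid) (X : list M) : Rbar :=
  Rbar_lub (fun r : Rbar => exists F : list M, r = num_inf_components M X F).

(* Main.v *)
Require Import Defs.
From Stdlib Require Import Reals List Relations Lia Lra ZArith Classical IndefiniteDescription.
From Coquelicot Require Import Coquelicot.

Definition near (M : monoid) (X : list M) (x y : M) (n : nat) : Prop :=
  exists w, word_over M X w /\ (length w <= n)%nat /\ mop M x (word_eval M w) = y.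

Lemma near_mono (M : monoid) (X : list M) x y n m : near M X x y n -> (n <= m)%nat -> near M X x y m.
Proof. intros [w [H1 [H2 H3]]] Hm. exists w; repeat split; auto; lia. Qed.

Lemma near_refl (M : monoid) (X : list M) x : near M X x x 0.
Proof. exists nil; repeat split; simpl; auto. intros a []. apply munit_r. Qed.

Lemma eval_app (M : monoid) (w1 w2 : list M) :
  word_eval M (w1 ++ w2) = mop M (word_eval M w1) (word_eval M w2).
Proof.
  induction w1 as [|a w1 IH]; simpl. now rewrite munit_l.
  rewrite IH, massoc. reflexivity.
Qed.

Lemma near_trans (M : monoid) (X : list M) x y z n m :
  near M X x y n -> near M X y z m -> near M X x z (n + m).
Proof.
  intros [w1 [H1 [H2 H3]]] [w2 [G1 [G2 G3]]].
  exists (w1 ++ w2); repeat split.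
  - intros a Ha; apply in_app_or in Ha; destruct Ha; auto.
  - rewrite length_app; lia.
  - rewrite eval_app, massoc, H3; exact G3.
Qed.

Lemma near_gen (M : monoid) (X : list M) x a : In a X -> near M X x (mop M x a) 1.
Proof.
  intros Ha; exists (a :: nil); repeat split; simpl; auto.
  intros b [<-|[]]; auto. now rewrite munit_r.
Qed.

Fixpoint words {A} (X : list A) (n : nat) : list (list A) :=
  match n with
  | O => nil :: nil
  | S n => nil :: flat_map (fun a => map (cons a) (words X n)) X
  end.

Lemma words_complete {A} (X : list A) n w :
  (forall a, In a w -> In a X) -> (length w <= n)%nat -> In w (words X n).
Proof.
  revert w; induction n as [|n IH]; intros w Hw Hl.
  - destruct w; simpl in *; [auto | lia].
  - destruct w as [|a w]; simpl; [auto|right].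
    apply in_flat_map; exists a; split. apply Hw; simpl; auto.
    apply in_map. apply IH. intros b Hb; apply Hw; simpl; auto. simpl in Hl; lia.
Qed.

Lemma words_sound {A} (X : list A) n w :
  In w (words X n) -> (forall a, In a w -> In a X) /\ (length w <= n)%nat.
Proof.
  revert w; induction n as [|n IH]; intros w Hw; simpl in Hw.
  - destruct Hw as [<-|[]]; simpl; split; [intros a []| lia].
  - destruct Hw as [<-|Hw]. simpl; split; [intros a []| lia].
    apply in_flat_map in Hw; destruct Hw as [a [Ha Hw]].
    apply in_map_iff in Hw; destruct Hw as [w' [<- Hw']].
    destruct (IH _ Hw') as [G1 G2]. simpl; split; [|lia].
    intros b [<-|Hb]; auto.
Qed.

Definition ballL (M : monoid) (X : list M) (l : list M) (n : nat) : list M :=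
  flat_map (fun z => map (fun w => mop M z (word_eval M w)) (words X n)) l.

Lemma ballL_spec M X l n y : In y (ballL M X l n) <-> exists z, In z l /\ near M X z y n.
Proof.
  unfold ballL; rewrite in_flat_map; split.
  - intros [z [Hz Hy]]; apply in_map_iff in Hy; destruct Hy as [w [<- Hw]].
    apply words_sound in Hw; destruct Hw. exists z; split; auto. exists w; auto.
  - intros [z [Hz [w [H1 [H2 H3]]]]]. exists z; split; auto.
    apply in_map_iff; exists w; split; auto. apply words_complete; auto.
Qed.

Lemma adj_sym (M : monoid) (X : list M) F u v : adj_minus M X F u v -> adj_minus M X F v u.
Proof.
  intros [H1 [H2 [a [Ha Hd]]]]; repeat split; auto. exists a; split; auto; tauto.
Qed.

Lemma crt_sym (M : monoid) (X : list M) F u v :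
  clos_refl_trans M (adj_minus M X F) u v -> clos_refl_trans M (adj_minus M X F) v u.
Proof.
  induction 1. apply rt_step, adj_sym; auto. apply rt_refl. eapply rt_trans; eauto.
Qed.

Lemma crt_mono (M : monoid) (X : list M) F E u v : (forall z, In z F -> In z E) ->
  clos_refl_trans M (adj_minus M X E) u v -> clos_refl_trans M (adj_minus M X F) u v.
Proof.
  intros HFE; induction 1. 2: apply rt_refl. 2: eapply rt_trans; eauto.
  apply rt_step. destruct H as [H1 [H2 H3]]; repeat split; auto.
Qed.

Lemma path_word (M : monoid) (X : list M) F w : word_over M X w -> forall x,
  (forall z, near M X z (mop M x (word_eval M w)) (length w) -> ~ In z F) ->
  clos_refl_trans M (adj_minus M X F) x (mop M x (word_eval M w)).
Proof.
  induction w as [|a w IH]; intros Hw x H; simpl in *.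
  - rewrite munit_r; apply rt_refl.
  - assert (Ha : In a X) by (apply Hw; simpl; auto).
    assert (Hw' : word_over M X w) by (intros b Hb; apply Hw; simpl; auto).
    rewrite massoc in *. apply rt_trans with (mop M x a).
    + apply rt_step. repeat split.
      * apply H. exists (a :: w); repeat split; simpl; auto. rewrite massoc; auto.
      * apply H. eapply near_mono. exists w; repeat split; eauto. lia.
      * exists a; split; auto.
    + apply IH; auto. intros z Hz; apply H. eapply near_mono; eauto.
Qed.

Lemma path_near (M : monoid) (X : list M) F x y n : near M X x y n ->
  (forall z, near M X z y n -> ~ In z F) ->
  clos_refl_trans M (adj_minus M X F) x y.
Proof.
  intros [w [H1 [H2 H3]]] H. subst y. apply path_word; auto.
  intros z Hz; apply H; eapply near_mono; eauto.
Qed.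

Definition Tlist (M : monoid) (X : list M) (E : list M) : list M :=
  munit M :: flat_map (fun e => map (mop M e) X) E.

Lemma reach_T (M : monoid) (X : list M) (HX : generates M X) E u :
  ~ In u E -> exists t, In t (Tlist M X E) /\ ~ In t E /\
     clos_refl_trans M (adj_minus M X E) t u.
Proof.
  intros Hu.
  set (Q := fun y => In y E \/ (~ In y E /\ exists t, In t (Tlist M X E) /\ ~ In t E /\
     clos_refl_trans M (adj_minus M X E) t y)).
  assert (Hstep : forall y a, In a X -> Q y -> Q (mop M y a)).
  { intros y a Ha [Hy|[Hy [t [T1 [T2 T3]]]]];
    destruct (classic (In (mop M y a) E)) as [Hya|Hya]; try (left; exact Hya); right;
    split; auto.
    - exists (mop M y a); repeat split; auto; [|apply rt_refl].
      right; apply in_flat_map; exists y; split; auto; apply in_map; auto.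
    - exists t; repeat split; auto. eapply rt_trans; [exact T3|].
      apply rt_step; repeat split; auto.
      exists a; split; auto. }
  assert (Hw : forall w, word_over M X w -> forall x, Q x -> Q (mop M x (word_eval M w))).
  { induction w as [|a w IH]; intros Hw x Hx; simpl.
    - rewrite munit_r; auto.
    - rewrite massoc. apply IH. intros b Hb; apply Hw; simpl; auto.
      apply Hstep; auto. apply Hw; simpl; auto. }
  destruct (HX u) as [w [Hw1 Hw2]].
  assert (Q1 : Q (munit M)).
  { destruct (classic (In (munit M) E)) as [H|H]; [left; auto|right; split; auto].
    exists (munit M); repeat split; auto. left; auto. apply rt_refl. }
  pose proof (Hw w Hw1 _ Q1) as HQ. rewrite munit_l, <- Hw2 in HQ.
  destruct HQ as [HQ|[_ HQ]]; [contradiction|exact HQ].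
Qed.

Definition coarse (M N : monoid) (X : list M) (Y : list N) (f : M -> N) (g : N -> M)
  (A B Mu : nat) : Prop :=
  (forall x y n, near M X x y n -> near N Y (f x) (f y) (A*n+B)) /\
  (forall x y n, near N Y (f x) (f y) n -> near M X x y (A*n+B)) /\
  (forall n, near N Y n (f (g n)) Mu /\ near N Y (f (g n)) n Mu).

Lemma coarse_sym M N X Y f g A B Mu : coarse M N X Y f g A B Mu ->
  exists A' B' Mu', coarse N M Y X g f A' B' Mu'.
Proof.
  intros [h1 [h2 h3]].
  exists A, (A*(2*Mu)+B+2*Mu)%nat, (A*Mu+B)%nat. split; [|split].
  - intros n m k Hk.
    assert (H : near N Y (f (g n)) (f (g m)) (Mu + k + Mu)).
    { eapply near_trans; [eapply near_trans|]; [apply h3|exact Hk|apply h3]. }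
    apply h2 in H. eapply near_mono; [exact H|nia].
  - intros n m k Hk. apply h1 in Hk.
    assert (H : near N Y n m (Mu + (A*k+B) + Mu)).
    { eapply near_trans; [eapply near_trans|]; [apply h3|exact Hk|apply h3]. }
    eapply near_mono; [exact H|nia].
  - intros x; split.
    + apply h2. apply h3.
    + apply h2. apply h3.
Qed.

Lemma fin_preimage (M N : monoid) (X : list M) (f : M -> N) (B : nat)
  (h2 : forall x y, f x = f y -> near M X x y B) :
  forall l : list N, exists L, forall v, In (f v) l -> In v L.
Proof.
  induction l as [|n l [L HL]].
  - exists nil; intros v [].
  - destruct (classic (exists x0, f x0 = n)) as [[x0 Hx0]|Hn].
    + exists (ballL M X (x0 :: nil) B ++ L). intros v [Hv|Hv]; apply in_or_app.
      * left. apply ballL_spec. exists x0; split; simpl; auto. apply h2; congruence.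
      * right; auto.
    + exists L. intros v [Hv|Hv]; auto. exfalso; apply Hn; eauto.
Qed.

Lemma core (M N : monoid) (X : list M) (Y : list N) f g A B Mu
  (HX : generates M X) : coarse M N X Y f g A B Mu ->
  forall F k, at_least_inf_components M X F k ->
  exists F', at_least_inf_components N Y F' k.
Proof.
  intros [h1 [h2 h3]] F k [reps [Hinf Hdis]].
  set (L := (A*(Mu+1+Mu)+B)%nat).
  set (K := (A*Mu+B)%nat).
  set (R := (A*(K+L)+B+Mu)%nat).
  set (C := (A*1+B)%nat).
  set (R2 := (A*(R+C)+B)%nat).
  set (F' := ballL N Y (map f F) R).
  set (E := ballL M X F R2).
  assert (HFE : forall z, In z F -> In z E).
  { intros z Hz; apply ballL_spec; exists z; split; auto; eapply near_mono; [apply near_refl|lia]. }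
  assert (Sep1 : forall n m, ~ In m F' -> near N Y n m 1 ->
            clos_refl_trans M (adj_minus M X F) (g n) (g m)).
  { intros n m Hm Hnm.
    assert (H : near N Y (f (g n)) (f (g m)) (Mu + 1 + Mu)).
    { eapply near_trans; [eapply near_trans|]; [apply h3|exact Hnm|apply h3]. }
    apply h2 in H. apply (path_near _ _ _ _ _ _ H).
    intros z Hz HzF. apply Hm. apply ballL_spec. exists (f z); split.
    apply in_map; auto.
    apply h1 in Hz. eapply near_mono; [eapply near_trans; [exact Hz| apply h3]|].
    clear -A; unfold R; apply Nat.add_le_mono_r, Nat.add_le_mono_r, Nat.mul_le_mono_l; lia. }
  assert (Sep : forall n m, clos_refl_trans N (adj_minus N Y F') n m ->
            clos_refl_trans M (adj_minus M X F) (g n) (g m)).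
  { induction 1 as [n m Hnm| |]. 3: eapply rt_trans; eauto. 2: apply rt_refl.
    destruct Hnm as [Hn [Hm [b [Hb [Hd|Hd]]]]].
    - apply Sep1; auto. subst; apply near_gen; auto.
    - apply crt_sym. apply Sep1; auto. subst; apply near_gen; auto. }
  assert (Back : forall u, ~ In (f u) F' ->
            clos_refl_trans M (adj_minus M X F) u (g (f u))).
  { intros u Hu. assert (H : near M X u (g (f u)) K) by (apply h2, h3).
    apply (path_near _ _ _ _ _ _ H). intros z Hz HzF. apply Hu.
    apply ballL_spec. exists (f z); split. apply in_map; auto.
    apply h1 in Hz. eapply near_mono; [eapply near_trans; [exact Hz| apply h3]|].
    clear -A; unfold R; apply Nat.add_le_mono_r, Nat.add_le_mono_r, Nat.mul_le_mono_l; lia. }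
  assert (NotIn : forall u, ~ In u E -> ~ In (f u) F').
  { intros u Hu Hfu. apply Hu. apply ballL_spec in Hfu.
    destruct Hfu as [z' [Hz' Hn]]. apply in_map_iff in Hz'.
    destruct Hz' as [z [<- Hz]]. apply ballL_spec. exists z; split; auto.
    apply h2 in Hn. eapply near_mono; [exact Hn|]. clear -A; unfold R2; apply Nat.add_le_mono_r, Nat.mul_le_mono_l; lia. }
  assert (Fwd1 : forall u v, ~ In v E -> near M X u v 1 ->
            clos_refl_trans N (adj_minus N Y F') (f u) (f v)).
  { intros u v Hv Huv. apply h1 in Huv.
    apply (path_near _ _ _ _ _ _ Huv). intros p Hp HpF. apply Hv.
    apply ballL_spec in HpF. destruct HpF as [z' [Hz' Hn]].
    apply in_map_iff in Hz'. destruct Hz' as [z [<- Hz]].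
    apply ballL_spec. exists z; split; auto.
    assert (H := near_trans _ _ _ _ _ _ _ Hn Hp). apply h2 in H.
    eapply near_mono; [exact H|]. unfold R2; lia. }
  assert (Fwd : forall u v, clos_refl_trans M (adj_minus M X E) u v ->
            clos_refl_trans N (adj_minus N Y F') (f u) (f v)).
  { induction 1 as [u v Huv| |]. 3: eapply rt_trans; eauto. 2: apply rt_refl.
    destruct Huv as [Hu [Hv [b [Hb [Hd|Hd]]]]].
    - apply Fwd1; auto. subst; apply near_gen; auto.
    - apply crt_sym. apply Fwd1; auto. subst; apply near_gen; auto. }
  assert (FP : forall l : list N, exists L0, forall v, In (f v) l -> In v L0).
  { apply (fin_preimage M N X f B). intros x y Hxy. 
    replace B with (A*0+B)%nat by lia. apply h2. rewrite Hxy; apply near_refl. }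
  assert (Ex : forall i, (i < k)%nat -> exists u,
            conn_minus M X F (reps i) u /\ infinite_component M X E u).
  { intros i Hi. apply NNPP; intros Hno.
    destruct (Hinf i Hi) as [Hri Hfin]. apply Hfin.
    assert (Cov : forall T, exists Lc, forall t, In t T -> ~ In t E ->
              conn_minus M X F (reps i) t ->
              forall v, conn_minus M X E t v -> In v Lc).
    { induction T as [|t T [Lc HLc]].
      - exists nil; intros t [].
      - destruct (classic (~ In t E /\ conn_minus M X F (reps i) t)) as [[Ht1 Ht2]|Ht].
        + assert (Hl : exists l, forall u, conn_minus M X E t u -> In u l).
          { apply NNPP; intros Hl. apply Hno. exists t; split; auto. split; auto. }
          destruct Hl as [l Hl]. exists (l ++ Lc).
          intros t' [<-|Ht'] Ht'1 Ht'2 v Hv; apply in_or_app; [left; auto|right; eauto].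
        + exists Lc. intros t' [<-|Ht'] Ht'1 Ht'2 v Hv; [exfalso; tauto|eauto]. }
    destruct (Cov (Tlist M X E)) as [Lc HLc].
    exists (E ++ Lc). intros v Hv. apply in_or_app.
    destruct (classic (In v E)) as [HvE|HvE]; [left; auto|right].
    destruct (reach_T M X HX E v HvE) as [t [Ht1 [Ht2 Ht3]]].
    apply (HLc t); auto.
    - destruct Hv as [Hv1 [Hv2 Hv3]]. split; auto. split. intro; apply Ht2; auto.
      eapply rt_trans; [exact Hv3|]. apply crt_sym. eapply crt_mono; eauto.
    - split; auto. }
  assert (Ch : exists u : nat -> M, forall i, (i < k)%nat ->
            conn_minus M X F (reps i) (u i) /\ infinite_component M X E (u i)).
  { destruct (functional_choice (fun i u => (i < k)%nat ->
        conn_minus M X F (reps i) u /\ infinite_component M X E u)) as [u Hu].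
    - intros i. destruct (classic (i < k)%nat) as [Hi|Hi].
      + destruct (Ex i Hi) as [u Hu]; exists u; auto.
      + exists (munit M); intros; contradiction.
    - exists u; auto. }
  destruct Ch as [u Hu].
  exists F', (fun i => f (u i)). split.
  - intros i Hi. destruct (Hu i Hi) as [_ [HuE Hfin]]. split. apply NotIn; auto.
    intros [l Hl]. destruct (FP l) as [L0 HL0]. apply Hfin. exists L0.
    intros v [_ [Hv Hcrt]]. apply HL0, Hl. split; [apply NotIn; auto|].
    split; [apply NotIn; auto|]. apply Fwd; auto.
  - intros i j Hi Hj Hij [Hfi [Hfj Hc]].
    destruct (Hu i Hi) as [[Hr1 [_ Hr2]] _]. destruct (Hu j Hj) as [[Hr3 [_ Hr4]] _].
    apply (Hdis i j Hi Hj Hij). split; auto. split; auto.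
    eapply rt_trans; [exact Hr2|].
    eapply rt_trans; [apply Back; exact Hfi|].
    eapply rt_trans; [apply Sep; exact Hc|].
    apply crt_sym. eapply rt_trans; [exact Hr4|]. apply Back; auto.
Qed.

Lemma nat_min (P : nat -> Prop) : (exists n, P n) ->
  exists n, P n /\ forall m, P m -> (n <= m)%nat.
Proof.
  intros [n Hn]. apply NNPP; intros Hno.
  assert (H : forall N m, (m < N)%nat -> ~ P m).
  { induction N as [|N IH]; intros m Hm Pm; [lia|].
    destruct (Nat.eq_dec m N) as [->|Hne]; [|apply (IH m); auto; lia].
    apply Hno. exists N; split; auto. intros m' Pm'.
    destruct (Compare_dec.le_lt_dec N m'); auto. exfalso; apply (IH m'); auto. }
  apply (H (S n) n); auto.
Qed.

Definition Sx (M : monoid) (X : list M) (x y : M) (n : nat) :=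
  exists w, word_over M X w /\ mop M x (word_eval M w) = y /\ length w = n.

Lemma dist_cases (M : monoid) (X : list M) x y :
  (exists n, Sx M X x y n /\ (forall m, Sx M X x y m -> (n <= m)%nat) /\
      Defs.dist M X x y = Finite (INR n)) \/
  ((forall n, ~ Sx M X x y n) /\ Defs.dist M X x y = p_infty).
Proof.
  destruct (classic (exists n, Sx M X x y n)) as [Hex|Hno].
  - left. destruct (nat_min _ Hex) as [n [Hn Hmin]]. exists n; split; auto; split; auto.
    unfold Defs.dist. apply Rbar_is_glb_unique. split.
    + intros r [w [H1 [H2 ->]]]. simpl. apply le_INR, Hmin. exists w; auto.
    + intros b Hb. apply Hb. destruct Hn as [w [H1 [H2 H3]]]. exists w; repeat split; auto.
      now rewrite H3.
  - right. split. intros n Hn; apply Hno; eauto.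
    unfold Defs.dist. apply Rbar_is_glb_unique. split.
    + intros r [w [H1 [H2 ->]]]. exfalso; apply Hno. exists (length w), w; auto.
    + intros b _. destruct b; simpl; auto.
Qed.

Lemma dist_le_near (M : monoid) (X : list M) x y r :
  Rbar_le (Defs.dist M X x y) (Finite r) -> exists n, INR n <= r /\ near M X x y n.
Proof.
  destruct (dist_cases M X x y) as [[n [Hn [_ ->]]]|[_ ->]]; simpl; [|tauto].
  intros H; exists n; split; auto. destruct Hn as [w [H1 [H2 H3]]].
  exists w; repeat split; auto; lia.
Qed.

Lemma near_dist (M : monoid) (X : list M) x y n : near M X x y n ->
  exists n0, (n0 <= n)%nat /\ Defs.dist M X x y = Finite (INR n0) /\ near M X x y n0.
Proof.
  intros Hn. destruct Hn as [w [H1 [H2 H3]]].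
  destruct (dist_cases M X x y) as [[n0 [Hn0 [Hmin Hd]]]|[Hno _]].
  - exists n0. split. specialize (Hmin (length w)). 
    assert (length w >= n0)%nat by (apply Hmin; exists w; auto). lia.
    split; auto. destruct Hn0 as [w' [G1 [G2 G3]]]. exists w'; repeat split; auto; lia.
  - exfalso; apply (Hno (length w)); exists w; auto.
Qed.

Lemma nat_above (r : R) : exists n : nat, r <= INR n.
Proof.
  destruct (Rle_dec r 0) as [H|H]. exists O; simpl; lra.
  destruct (archimed r) as [H1 _].
  exists (Z.to_nat (up r)). rewrite INR_IZR_INZ, Z2Nat.id. lra.
  apply le_IZR. lra.
Qed.

Lemma qi_coarse (M N : monoid) (X : list M) (Y : list N) f :
  quasi_isometry M N X Y f -> exists A B Mu,
  (forall x y n, near M X x y n -> near N Y (f x) (f y) (A*n+B)) /\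
  (forall x y n, near N Y (f x) (f y) n -> near M X x y (A*n+B)) /\
  (forall n, exists x, near N Y n (f x) Mu /\ near N Y (f x) n Mu).
Proof.
  intros [lam [eps [mu [Hlam [Heps [Hmu [Hd Hs]]]]]]].
  destruct (nat_above lam) as [A HA].
  destruct (nat_above (lam*eps+eps)) as [B HB].
  destruct (nat_above mu) as [Mu HMu].
  assert (HA0 : 0 <= INR A) by apply pos_INR.
  exists A, B, Mu. split; [|split].
  - intros x y n Hn. destruct (near_dist _ _ _ _ _ Hn) as [n0 [Hn0 [Hdn _]]].
    destruct (Hd x y) as [_ Hup]. rewrite Hdn in Hup. simpl in Hup.
    destruct (dist_le_near _ _ _ _ _ Hup) as [m [Hm Hnm]].
    eapply near_mono; [exact Hnm|]. apply INR_le. rewrite plus_INR, mult_INR.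
    apply le_INR in Hn0. assert (0 <= INR n0) by apply pos_INR. nra.
  - intros x y m Hm. destruct (near_dist _ _ _ _ _ Hm) as [m0 [Hm0 [Hdm _]]].
    destruct (Hd x y) as [Hlow _]. rewrite Hdm in Hlow.
    destruct (dist_cases M X x y) as [[n0 [Hn0 [_ Hdn]]]|[_ Hdn]]; rewrite Hdn in Hlow.
    + simpl in Hlow.
      assert (H1 : INR n0 <= lam * (INR m0 + eps)).
      { replace (INR n0) with (lam * (/ lam * INR n0)) by (field; lra).
        apply Rmult_le_compat_l; lra. }
      apply le_INR in Hm0. assert (0 <= INR m0) by apply pos_INR.
      assert (Hn : near M X x y n0).
      { destruct Hn0 as [w [G1 [G2 G3]]]. exists w; repeat split; auto; lia. }
      eapply near_mono; [exact Hn|].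
      apply INR_le. rewrite plus_INR, mult_INR. nra.
    + exfalso. unfold Rbar_mult, Rbar_mult' in Hlow.
      destruct (Rle_dec 0 (/ lam)) as [H|H]; [|apply H; left; apply Rinv_0_lt_compat; lra].
      destruct (Rle_lt_or_eq_dec 0 (/ lam) H) as [H'|H']; simpl in Hlow; auto.
      assert (0 < / lam) by (apply Rinv_0_lt_compat; lra). lra.
  - intros n. destruct (Hs n) as [x [H1 H2]]. exists x.
    destruct (dist_le_near _ _ _ _ _ H1) as [k1 [Hk1 Hn1]].
    destruct (dist_le_near _ _ _ _ _ H2) as [k2 [Hk2 Hn2]].
    split; eapply near_mono; eauto; apply INR_le; lra.
Qed.

Lemma lub_spec (S : Rbar -> Prop) : Rbar_is_lub S (Rbar_lub S).
Proof. unfold Rbar_lub; destruct (Rbar_ex_lub S); simpl; auto. Qed.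

Lemma ends_eq (M : monoid) (X : list M) :
  num_ends M X = Rbar_lub (fun r => exists k,
     (exists F, at_least_inf_components M X F k) /\ r = Finite (INR k)).
Proof.
  set (U := fun r => exists k,
     (exists F, at_least_inf_components M X F k) /\ r = Finite (INR k)).
  unfold num_ends. apply Rbar_is_lub_unique.
  destruct (Rbar_ex_lub U) as [u Hu].
  assert (Hlu : Rbar_lub U = u) by (apply Rbar_is_lub_unique; exact Hu).
  rewrite Hlu. destruct Hu as [Hub Hleast]. split.
  - intros r [F ->]. unfold num_inf_components.
    destruct (lub_spec (fun r => exists k, at_least_inf_components M X F k /\
        r = Finite (INR k))) as [Hs1 Hs2]. apply Hs2.
    intros r [k [Hk ->]]. apply Hub. exists k; split; eauto.
  - intros b Hb. apply Hleast. intros r [k [[F Hk] ->]].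
    eapply Rbar_le_trans; [|apply Hb; exists F; reflexivity].
    unfold num_inf_components.
    destruct (lub_spec (fun r => exists k, at_least_inf_components M X F k /\
        r = Finite (INR k))) as [Hs1 Hs2]. apply Hs1. exists k; auto.
Qed.

Theorem theorem7p2 (M N : monoid) (X : list M) (Y : list N)
  (HX : generates M X) (HY : generates N Y)
  (Hqi : quasi_isometric M N X Y) :
  num_ends M X = num_ends N Y.
Proof.
  destruct Hqi as [f Hf]. destruct (qi_coarse _ _ _ _ _ Hf) as [A [B [Mu [h1 [h2 h3]]]]].
  destruct (functional_choice _ h3) as [g Hg].
  assert (Hc : coarse M N X Y f g A B Mu) by (split; [|split]; auto).
  destruct (coarse_sym _ _ _ _ _ _ _ _ _ Hc) as [A' [B' [Mu' Hc']]].
  rewrite !ends_eq. apply Rbar_lub_rw. intros r; split.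
  - intros [k0 [[F Hk] ->]]. exists k0; split; auto. exact (core M N X Y f g A B Mu HX Hc F k0 Hk).
  - intros [k0 [[F Hk] ->]]. exists k0; split; auto. exact (core N M Y X g f A' B' Mu' HY Hc' F k0 Hk).
Qed.
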